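(* Let $\mathcal{F}$ be a linear $k$-uniform family with $k\geq 2$ and let $\mathcal{M}$ be a maximum matching of $\mathcal{F}$. If $B=\{x_1,x_2,\ldots,x_k\}\in\mathcal{M}$ is such that $d_1(x_i,\mathcal{M})\geq k$ for some $1\leq i\leq k$, then $d_1(x_j,\mathcal{M})=0$ for all $1\leq j\leq k$ with $j\neq i$.
   Context: A family is a finite collection of distinct subsets of a vertex set; it is $k$-uniform if every member has exactly $k$ elements and linear if any two distinct members share at most one vertex. A matching is a collection of pairwise disjoint members; it is maximum if it has the largest possible size. $X_{\mathcal{M}}=\bigcup_{A\in\mathcal{M}}A$. For $i\in\{1,\ldots,k\}$, $D_i(\mathcal{F},\mathcal{M})=\{A\in\mathcal{F}: |A\cap X_{\mathcal{M}}|=i\}$, and for a vertex $x$, $d_i(x,\mathcal{M})=|\{A\in D_i(\mathcal{F},\mathcal{M}): x\in A\}|$. *)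

(* Defs.v *)
From mathcomp Require Import all_boot.
Set Implicit Arguments. Unset Strict Implicit. Unset Printing Implicit Defensive.

Section Families.
Variable T : finType.
Implicit Types (F M : {set {set T}}) (A B : {set T}) (x : T).

Definition uniform (k : nat) F : Prop := forall A, A \in F -> #|A| = k.

Definition linear F : Prop :=
  forall A B, A \in F -> B \in F -> A != B -> #|A :&: B| <= 1.

Definition matching F M : Prop :=
  M \subset F /\
  (forall A B, A \in M -> B \in M -> A != B -> [disjoint A & B]).

Definition maximum_matching F M : Prop :=
  matching F M /\ (forall M', matching F M' -> #|M'| <= #|M|).

Definition XM M : {set T} := cover M.

Definition D F M (i : nat) : {set {set T}} :=
  [set A in F | #|A :&: XM M| == i].

Definition deg F M (i : nat) x : nat := #|[set A in D F M i | x \in A]|.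

End Families.

(* Main.v *)
Require Import Defs.
From mathcomp Require Import all_boot.
From mathcomp Require Import zify.
Set Implicit Arguments. Unset Strict Implicit. Unset Printing Implicit Defensive.

Section Aux.
Variable T : finType.
Implicit Types (F M : {set {set T}}) (A B C : {set T}) (x : T).

Lemma disjointP (A B : {set T}) :
  reflect (forall z, z \in A -> z \in B -> False) [disjoint A & B].
Proof.
apply: (iffP idP) => [H z zA zB|H]; first by rewrite (disjointFr H zA) in zB.
apply/pred0P => z /=; apply/negbTE/negP => /andP [zA zB]; exact: H zA zB.
Qed.

Lemma inXM M C z : C \in M -> z \in C -> z \in XM M.
Proof. by move=> CM zC; apply/bigcupP; exists C. Qed.

Lemma single1 (S : {set T}) a : #|S| = 1 -> a \in S -> S = [set a].
Proof. by move/eqP/cards1P=> [z ->]; rewrite inE => /eqP ->. Qed.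

Lemma disjM F M A B C a : matching F M -> B \in M -> C \in M -> C != B ->
  A :&: XM M = [set a] -> a \in B -> [disjoint A & C].
Proof.
move=> [_ Hd] BM CM CB HA aB; have CB_sym : B != C by rewrite eq_sym.
apply/disjointP => z zA zC.
have : z \in A :&: XM M by rewrite inE zA (inXM CM zC).
rewrite HA inE => /eqP ez; subst z.
by move: (Hd B C BM CM CB_sym) => /disjointP H; exact: H aB zC.
Qed.

Lemma notinM F M k A : 2 <= k -> uniform k F -> A \in F -> A \in M ->
  #|A :&: XM M| = 1 -> False.
Proof.
move=> k2 U AF AM H.
have : A :&: XM M = A.
  by apply/setIidPl/subsetP => z zA; apply: inXM AM zA.
move=> E; rewrite E (U _ AF) in H; lia.
Qed.
End Aux.

Theorem lemma2 (T : finType) (k : nat) (F M : {set {set T}}) (B : {set T}) :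
  2 <= k ->
  uniform k F -> linear F ->
  maximum_matching F M ->
  B \in M ->
  forall x, x \in B -> k <= deg F M 1 x ->
  forall y, y \in B -> y != x -> deg F M 1 y = 0.
Proof.
move=> k2 U L [Mm Mmax] BM x xB dx y yB yx.
have MF : M \subset F by case: Mm.
have xX : x \in XM M := inXM BM xB.
apply/eqP; rewrite eqn0Ngt; apply/negP => /card_gt0P [Ay].
rewrite !inE => /andP [/andP [AyF /eqP Ay1] yAy].
have HAy : Ay :&: XM M = [set y] by apply: single1 => //; rewrite inE yAy (inXM BM yB).
set S := [set A in D F M 1 | x \in A].
have HS : forall A, A \in S -> [/\ A \in F, A :&: XM M = [set x] & x \in A].
  move=> A; rewrite !inE => /andP [/andP [AF /eqP A1] xA]; split => //.
  by apply: single1 => //; rewrite inE xA xX.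
have [Ax AxS dAx] : exists2 Ax, Ax \in S & [disjoint Ax & Ay].
  case: (boolP [exists A in S, [disjoint A & Ay]]).
    by move/existsP => [A /andP [AS dA]]; exists A.
  rewrite negb_exists => /forallP ND; exfalso.
  have ND' : forall A, A \in S -> ~~ [disjoint A & Ay].
    by move=> A AS; have := ND A; rewrite AS.
  pose f A := odflt x [pick z in A :&: Ay].
  have fI : forall A, A \in S -> f A \in A :&: Ay.
    move=> A AS; rewrite /f; case: pickP => [z -> //| H].
    exfalso; move: (ND' A AS) => /negP; apply; apply/disjointP => z zA zAy.
    by have := H z; rewrite inE zA zAy.
  have fX : forall A, A \in S -> f A \notin XM M.
    move=> A AS; apply/negP => fx.
    have := fI A AS; rewrite inE => /andP [fA fAy].
    case: (HS A AS) => _ HA _.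
    have : f A \in A :&: XM M by rewrite inE fA fx.
    have : f A \in Ay :&: XM M by rewrite inE fAy fx.
    rewrite HA HAy !inE => /eqP -> /eqP E.
    by rewrite E eqxx in yx.
  have finj : {in S &, injective f}.
    move=> A A' AS A'S E; apply/eqP; apply/negPn/negP => AA'.
    case: (HS A AS) => AF _ xA; case: (HS A' A'S) => A'F _ xA'.
    have := L A A' AF A'F AA'.
    have h1 := fI A AS; have h2 := fI A' A'S.
    move: h1 h2; rewrite !inE => /andP [fA _] /andP [fA' _].
    have sub : [set x; f A] \subset A :&: A'.
      by apply/subsetP => z; rewrite !inE => /orP [] /eqP ->; rewrite ?xA ?xA' ?fA // E.
    have xf : x != f A by apply/eqP => E'; move: (fX A AS); rewrite -E' xX.
    have := subset_leq_card sub; rewrite cards2 xf => h2 h1; by have := leq_trans h2 h1.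
  have sub : f @: S \subset Ay :\: XM M.
    apply/subsetP => z /imsetP [A AS ->].
    have := fI A AS; rewrite inE => /andP [_ fAy].
    by rewrite in_setD fAy (fX A AS).
  have := subset_leq_card sub; rewrite (card_in_imset finj) cardsD HAy cards1 (U _ AyF).
  rewrite /deg -/S in dx; lia.
case: (HS Ax AxS) => AxF HAx xAx.
have AxAy : Ax != Ay.
  apply/eqP => E; rewrite -E in dAx; move: dAx => /disjointP H; exact (H x xAx xAx).
have AxM : Ax \notin M.
  apply/negP => AM; apply: (notinM k2 U AxF AM); by rewrite HAx cards1.
have AyM : Ay \notin M.
  apply/negP => AM; apply: (notinM k2 U AyF AM); by rewrite HAy cards1.
set M' := Ax |: (Ay |: (M :\ B)).
have : matching F M'.
  split.
    apply/subsetP => P; rewrite !inE => /orP [/eqP -> //|/orP [/eqP -> //|/andP [_ PM]]].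
    by apply: (subsetP MF).
  move=> P Q; rewrite !inE.
  have dA : forall A a C, A :&: XM M = [set a] -> a \in B -> C \in M -> C != B ->
     [disjoint A & C] /\ [disjoint C & A].
    move=> A a C HA aB CM CB; have := disjM Mm BM CM CB HA aB.
    by move=> h; split => //; rewrite disjoint_sym.
  case: Mm => _ Hd.
  move=> /orP [/eqP ->|/orP [/eqP ->|/andP [PB PM]]] /orP [/eqP ->|/orP [/eqP ->|/andP [QB QM]]];
    rewrite ?eqxx //.
  - by case: (dA _ _ _ HAx xB QM QB).
  - by rewrite disjoint_sym.
  - by case: (dA _ _ _ HAy yB QM QB).
  - by case: (dA _ _ _ HAx xB PM PB).
  - by case: (dA _ _ _ HAy yB PM PB).
  - by apply: Hd.
move/Mmax; rewrite /M' !cardsU1 !inE (negbTE AxAy) (negbTE AxM) (negbTE AyM) !andbF /=.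
rewrite (cardsD1 B M) BM => h; by rewrite add1n ltn_add2l ltnn in h.
Qed.
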